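(* Fix an iteration index $k$ and a current policy $\pi_k$. Assume that for $\rho_{\mathcal Q}$-almost every $q$ we have $0<\mu_{\pi_k}(q)<1$ (so that $\tilde\sigma_k(q)>0$). Then for every policy $\pi$, \[ \mathbb{E}_{q\sim\rho_{\mathcal Q}}\bigl[p_{\pi}(q)-p_{\pi_k}(q)\bigr] \;\ge\; \mathbb{E}_{q\sim\rho_{\mathcal Q}}\bigl[\tilde L_{\pi_k}(\pi(\cdot\mid q))\bigr] -2\sqrt{\mathbb{E}_{q\sim\rho_{\mathcal Q}}\Bigl(\tfrac{1-\rho^+(q)-\rho^-(q)-\tilde\sigma_k(q)}{\tilde\sigma_k(q)}\Bigr)^2}\; \sqrt{\mathbb{E}_{q\sim\rho_{\mathcal Q}}\mathrm{TV}^2\bigl(\pi(\cdot\mid q)\,\|\,\pi_k(\cdot\mid q)\bigr)}. \]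
   Context: Setting: $\mathcal Q$ is a set of prompts with a probability distribution $\rho_{\mathcal Q}$; $\mathcal O$ is a countable set of responses; $r^*:\mathcal Q\times\mathcal O\to\{0,1\}$ is the true (binary) reward. A policy $\pi$ assigns to each $q$ a probability distribution $\pi(\cdot\mid q)$ on $\mathcal O$. The success probability is $p_\pi(q)=\mathbb E_{o\sim\pi(\cdot\mid q)}[r^*(q,o)]$. $\mathrm{TV}(P,Q)=\sup_A|P(A)-Q(A)|$ is the total variation distance. Noise model: for each $q$ there are flip rates $\rho^+(q),\rho^-(q)\in[0,1]$; with $\xi\sim U[0,1]$ independent of $(q,o)$, the observed reward is $\tilde r(q,o,\xi)=(1-r^*(q,o))\mathbf 1_{\{\xi\le\rho^+(q)\}}+r^*(q,o)\mathbf 1_{\{\xi\le 1-\rho^-(q)\}}$. Define $\mu_{\pi_k}(q)=\rho^+(q)+(1-\rho^+(q)-\rho^-(q))\,p_{\pi_k}(q)$ and $\tilde\sigma_k(q)=\sqrt{\mu_{\pi_k}(q)(1-\mu_{\pi_k}(q))}$ (the mean and standard deviation of $\tilde r$ under $o\sim\pi_k(\cdot\mid q)$, $\xi\sim U[0,1]$). The noisy surrogate is \[ \tilde L_{\pi_k}(\pi(\cdot\mid q))=\frac{\mathbb E_{\xi,o\sim\pi(\cdot\mid q)}[\tilde r(q,o,\xi)]-\mathbb E_{\xi,o\sim\pi_k(\cdot\mid q)}[\tilde r(q,o,\xi)]}{\tilde\sigma_k(q)}=\frac{(1-\rho^+(q)-\rho^-(q))\,(p_\pi(q)-p_{\pi_k}(q))}{\tilde\sigma_k(q)}.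 \] *)

(* Defs.v *)
From HB Require Import structures.
From mathcomp Require Import all_boot all_order all_algebra.
From mathcomp Require Import all_classical all_reals all_analysis.
Set Implicit Arguments. Unset Strict Implicit. Unset Printing Implicit Defensive.
Import Order.TTheory GRing.Theory Num.Theory.
Local Open Scope classical_set_scope.
Local Open Scope ring_scope.

Section Defs.
Context (R : realType) (dQ dO : measure_display)
  (Q : measurableType dQ) (O : measurableType dO).

Definition succ_prob (rstar : Q -> O -> bool) (pi : Q -> {measure set O -> \bar R})
  (q : Q) : R :=
  fine (\int[pi q]_o ((rstar q o)%:R)%:E)%E.

Definition mu_noisy (rp rm : Q -> R) (rstar : Q -> O -> bool)
  (pik : Q -> {measure set O -> \bar R}) (q : Q) : R :=
  rp q + (1 - rp q - rm q) * succ_prob rstar pik q.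

Definition sigma_noisy (rp rm : Q -> R) (rstar : Q -> O -> bool)
  (pik : Q -> {measure set O -> \bar R}) (q : Q) : R :=
  Num.sqrt (mu_noisy rp rm rstar pik q * (1 - mu_noisy rp rm rstar pik q)).

Definition L_noisy (rp rm : Q -> R) (rstar : Q -> O -> bool)
  (pik pi : Q -> {measure set O -> \bar R}) (q : Q) : R :=
  (1 - rp q - rm q) * (succ_prob rstar pi q - succ_prob rstar pik q)
  / sigma_noisy rp rm rstar pik q.

Definition TV (m1 m2 : set O -> \bar R) : \bar R :=
  (ereal_sup [set `|m1 A - m2 A| | A in [set A | measurable A]])%E.

End Defs.

(* Main.v *)
Require Import Defs.
From HB Require Import structures.
From mathcomp Require Import all_boot all_order all_algebra.
From mathcomp Require Import all_classical all_reals all_analysis.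
From mathcomp Require Import measurable_realfun.
From mathcomp Require Import ring lra.
Import Order.TTheory GRing.Theory Num.Theory.
Local Open Scope classical_set_scope.
Local Open Scope ring_scope.

Lemma measurable_inv (R : realType) : measurable_fun [set: R] (fun x : R => x^-1).
Proof.
have -> : [set: R] = (~` [set 0]) `|` [set 0].
  by apply/seteqP; split => x //= _; case: (eqVneq x 0) => [->|/eqP]; [right|left].
apply/measurable_funU => //; first by apply: measurableC.
split; last exact: measurable_fun_set1.
apply: measurable_realfun.open_continuous_measurable_fun.
  rewrite openC; apply: accessible_closed_set1; apply: hausdorff_accessible; exact: Rhausdorff.
move=> x; rewrite inE /= => /eqP x0; exact: inv_continuous.
Qed.

Lemma ge0_le_integral_nm d (T : measurableType d) (R : realType)
  (mu : {measure set T -> \bar R}) (f g : T -> \bar R) :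
  (forall x, (0 <= f x)%E) -> (forall x, (f x <= g x)%E) ->
  (\int[mu]_x f x <= \int[mu]_x g x)%E.
Proof.
move=> f0 fg; rewrite !ge0_integralTE//; last by move=> x; exact: le_trans (f0 x) (fg x).
apply: le_ereal_sup => _ [h hf <-]; exists h => //= x; exact: le_trans (hf x) (fg x).
Qed.

Lemma succ_probE (R : realType) (dQ dO : measure_display)
  (Q : measurableType dQ) (O : measurableType dO) (rstar : Q -> O -> bool)
  (rstar_meas : measurable [set x : Q * O | rstar x.1 x.2])
  (pi : R.-pker Q ~> O) q :
  succ_prob rstar pi q = fine (pi q (xsection [set x : Q * O | rstar x.1 x.2] q)).
Proof.
rewrite /succ_prob; congr fine.
transitivity (\int[pi q]_o (\1_(xsection [set x : Q * O | rstar x.1 x.2] q) o)%:E)%E.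
  apply: eq_integral => o _; rewrite indicE /xsection; congr (_%:R)%:E.
  congr nat_of_bool; apply/idP/idP; rewrite !inE /= ?inE /=; by [].
have := @integral_indic _ _ R (pi q) setT measurableT (xsection [set x : Q * O | rstar x.1 x.2] q) (measurable_xsection _ rstar_meas).
by rewrite setIT.
Qed.

Arguments succ_probE {R dQ dO Q O rstar}.

Lemma pker_bound (R : realType) (dQ dO : measure_display)
  (Q : measurableType dQ) (O : measurableType dO) (k : R.-pker Q ~> O) q S :
  measurable S -> k q S = (fine (k q S))%:E /\ 0 <= fine (k q S) <= 1.
Proof.
move=> mS.
have h0 : (0 <= k q S)%E by [].
have h1 : (k q S <= 1)%E.
  rewrite -(prob_kernel (s:=k) q); apply: le_measure => //; rewrite inE //.
have hf : k q S \is a fin_num by rewrite ge0_fin_numE// (le_lt_trans h1) ?ltey.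
split; first by rewrite fineK.
by rewrite fine_ge0//= -lee_fin fineK.
Qed.

Arguments pker_bound {R dQ dO Q O}.

Theorem theorem3 (R : realType) (dQ dO : measure_display)
  (Q : measurableType dQ) (O : measurableType dO)
  (rhoQ : probability Q R)
  (O_countable : countable [set: O])
  (O_discrete : forall A : set O, measurable A)
  (rstar : Q -> O -> bool)
  (rstar_meas : measurable [set x : Q * O | rstar x.1 x.2])
  (rp rm : Q -> R)
  (rp_meas : measurable_fun [set: Q] rp) (rm_meas : measurable_fun [set: Q] rm)
  (rp01 : forall q, 0 <= rp q <= 1) (rm01 : forall q, 0 <= rm q <= 1)
  (pik : R.-pker Q ~> O)
  (hmu : {ae rhoQ, forall q, 0 < mu_noisy rp rm rstar pik q < 1}) :
  forall pi : R.-pker Q ~> O,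
  (\int[rhoQ]_q (L_noisy rp rm rstar pik pi q)%:E
     - 2%:E * sqrte (\int[rhoQ]_q
                (((1 - rp q - rm q - sigma_noisy rp rm rstar pik q)
                  / sigma_noisy rp rm rstar pik q) ^+ 2)%:E)
            * sqrte (\int[rhoQ]_q (TV (pi q) (pik q)) ^+ 2)
   <= \int[rhoQ]_q (succ_prob rstar pi q - succ_prob rstar pik q)%:E)%E.
Proof.
move=> pi.
pose A := [set x : Q * O | rstar x.1 x.2].
have mA : measurable A by [].
pose a q := succ_prob rstar pi q.
pose b q := succ_prob rstar pik q.
pose dd q := a q - b q.
pose s q := sigma_noisy rp rm rstar pik q.
pose c q := 1 - rp q - rm q.
pose X q := (c q - s q) / s q.
have mprob : forall (k : R.-pker Q ~> O), measurable_fun setT (fun q => succ_prob rstar k q).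
  move=> k; rewrite (_ : (fun q => _) = fun q => fine (k q (xsection A q))); last first.
    by apply/funext => q; exact: succ_probE.
  have h1 := measurable_fun_xsection_finite_kernel k (mem_set mA).
  have h2 : measurable_fun [set: \bar R] (@fine R) by apply: fine_measurable.
  have := measurableT_comp h2 h1. exact.
have md : measurable_fun setT dd by apply: measurable_funB; apply: mprob.
have mc : measurable_fun setT c.
  by apply: measurable_funB => //; apply: measurable_funB.
have mmu : measurable_fun setT (mu_noisy rp rm rstar pik).
  by apply: measurable_funD => //; apply: measurable_funM => //; exact: mprob.
have ms : measurable_fun setT s.
  apply: (measurableT_comp (measurable_realfun.continuous_measurable_fun (@sqrt_continuous R))).
  by apply: measurable_funM => //; apply: measurable_funB.
have msi : measurable_fun setT (fun q => (s q)^-1) by apply: measurableT_comp ms; exact: measurable_inv.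
have mX : measurable_fun setT X by apply: measurable_funM => //; exact: measurable_funB.
have mL : measurable_fun setT (L_noisy rp rm rstar pik pi).
  by apply: measurable_funM => //; apply: measurable_funM.
have mxs : forall q, measurable (xsection A q) by move=> q; exact: measurable_xsection.
have dbnd : forall q, `|dd q| <= 1.
  move=> q; have [_ /andP[a0 a1]] := pker_bound pi q _ (mxs q).
  have [_ /andP[b0 b1]] := pker_bound pik q _ (mxs q).
  rewrite /dd /a /b !succ_probE//; rewrite ler_norml; apply/andP; split; lra.
have TVd : forall q, (`|dd q|%:E <= TV (pi q) (pik q))%E.
  move=> q; rewrite /TV; apply: ereal_sup_ubound => /=; exists (xsection A q) => //.
  rewrite (pker_bound pi q _ (mxs q)).1 (pker_bound pik q _ (mxs q)).1 /dd /a /b !succ_probE//.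
have TV0 : forall q, (0 <= TV (pi q) (pik q))%E.
  by move=> q; apply: le_trans (TVd q).
have H := @hoelder _ _ _ rhoQ dd X 2 2 md mX (ltac:(by [])) (ltac:(by [])) (ltac:(by field)).
rewrite Lnorm1 in H.
have N2X : Lnorm rhoQ 2%:E (EFin \o X) = sqrte (\int[rhoQ]_q ((X q) ^+ 2)%:E)%E.
  rewrite unlock poweR12_sqrt; last by apply: integral_ge0 => q _; exact: poweR_ge0.
  congr sqrte; apply: eq_integral => q _ /= => /=.
  by rewrite powR_mulrn// real_normK// num_real.
have N2d : (Lnorm rhoQ 2%:E (EFin \o dd) <= sqrte (\int[rhoQ]_q (TV (pi q) (pik q)) ^+ 2))%E.
  rewrite unlock poweR12_sqrt; last by apply: integral_ge0 => q _; exact: poweR_ge0.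
  rewrite lee_sqrt; last by apply: integral_ge0 => q _; exact: expe_ge0.
  apply: ge0_le_integral_nm => q; first exact: poweR_ge0.
  rewrite /= powR_mulrn// EFin_expe lee_sqr//; exact: expe_ge0.
set IX := (\int[rhoQ]_q ((X q) ^+ 2)%:E)%E in N2X *.
set IT := (\int[rhoQ]_q (TV (pi q) (pik q)) ^+ 2)%E in N2d *.
set K := (2%:E * sqrte IX * sqrte IT)%E.
have K0 : (0 <= K)%E by rewrite mule_ge0 ?mule_ge0 ?sqrte_ge0.
have HK : (\int[rhoQ]_x `|(EFin \o (dd \* X)%R) x| <= K)%E.
  apply: (le_trans H); rewrite N2X.
  apply: (@le_trans _ _ (sqrte IT * sqrte IX)%E).
    by apply: lee_pmul => //; [exact: Lnorm_ge0 | exact: sqrte_ge0].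
  rewrite /K -muleA [X in (_ <= _ * X)%E]muleC.
  rewrite -[X in (X <= _)%E]mul1e; apply: lee_wpmul2r; first by rewrite mule_ge0 ?sqrte_ge0.
  by rewrite lee_fin ler1n.
have [Kfin|Kinf] := boolP (K \is a fin_num); last first.
  have -> : K = +oo%E.
    by apply/eqP; rewrite eq_le leey /= leNgt -ge0_fin_numE.
  by rewrite addeNy leNye.
have mY : measurable_fun setT (fun q => ((dd q * X q)%:E : \bar R)).
  by apply/measurable_EFinP; apply: measurable_funM.
have iY : rhoQ.-integrable setT (fun q => ((dd q * X q)%:E : \bar R)).
  apply/integrableP; split => //; apply: (le_lt_trans HK).
  by rewrite ltey_eq Kfin.
have id : rhoQ.-integrable setT (fun q => ((dd q)%:E : \bar R)).
  apply/integrableP; split; first exact/measurable_EFinP.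
  apply: (@le_lt_trans _ _ (\int[rhoQ]_q (cst 1%E) q)%E).
    by apply: ge0_le_integral_nm => q //=; rewrite lee_fin.
  rewrite integral_cst// mul1e; exact: (le_lt_trans (probability_le1 rhoQ measurableT) (ltey _)).
have IL : (\int[rhoQ]_q (L_noisy rp rm rstar pik pi q)%:E
   = \int[rhoQ]_q ((dd q)%:E + (dd q * X q)%:E))%E.
  apply: ae_eq_integral => //.
  - exact/measurable_EFinP.
  - by apply: emeasurable_funD => //; exact/measurable_EFinP.
  apply: filterS hmu => q /andP[h0 h1] _.
  have sq0 : 0 < s q by rewrite /s /sigma_noisy sqrtr_gt0 mulr_gt0// subr_gt0.
  rewrite -EFinD; congr EFin; rewrite /L_noisy /X /dd /c -/(s q).
  rewrite /a /b; field; exact: lt0r_neq0.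
rewrite IL integralD// leeBlDr// leeD2l//.
apply: (le_trans (lee_abs _)); apply: le_trans HK.
exact: le_abse_integral.
Qed.
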